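(* Under the hypotheses of the following statement, assume in addition that the solution $s(t)$ is persistent. Then $s(t)\to\bar s$ as $t\to\infty$. Statement: consider the generalized mass-action system $\dot s=f(u,s)=\sum_{j=1}^{r}u_j(t)\,s^{v_{\cdot j}}(v'_{\cdot j}-v_{\cdot j})$, $s(0)=s_0\in\mathbb{R}^n_{\ge0}$, with $u:[0,\infty)\to\mathbb{U}\subset\mathbb{R}^r_{>0}$, $\lim_{t\to\infty}u(t)=\bar u\in\mathbb{R}^r_{>0}$, $s(t)$ a bounded solution defined for all $t\ge0$, $\bar s\in\mathbb{R}^n_{>0}$ the unique equilibrium of $\dot s=f(\bar u,s)$ in $(s_0+\mathscr{S})\cap\mathbb{R}^n_{>0}$, and $V$ an ISS-Lyapunov function with respect to $(\bar u,\bar s)$ for this system.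
   Context: A CRN has species $S_1,\dots,S_n$ and reactions $v_{\cdot j}\to v'_{\cdot j}$, $j=1,\dots,r$, $v_{\cdot j},v'_{\cdot j}\in\mathbb{Z}^n_{\ge0}$, $v_{\cdot j}\ne v'_{\cdot j}$; $s^{v}=\prod_i s_i^{v_i}$ with $0^0=1$; $\mathscr{S}=\mathrm{span}\{v'_{\cdot j}-v_{\cdot j}\}$ is the stoichiometric subspace. A solution $s(t)$ is persistent if $\liminf_{t\to\infty}s_i(t)>0$ for every $i=1,\dots,n$. ISS-Lyapunov function with respect to $(\bar u,\bar s)$: a continuous $V:\mathbb{R}^n_{\ge0}\to\mathbb{R}_{\ge0}$ such that (i) $V|_{\mathbb{R}^n_{>0}}$ is $C^1$; (ii) $V(s)\to\infty$ as $|s|\to\infty$; (iii) $V(\bar s)=0$ and $V(s)>0$ for $s\ne\bar s$; (iv) for each compact $F\subset\mathbb{R}^n_{\ge0}$ there exist class $\mathcal{K}_\infty$ functions $\alpha,\rho$ (continuous, strictly increasing, zero at zero, unbounded) with $\nabla V(s)^\top f(u,s)\le-\alpha(|s-\bar s|)+\rho(|u-\bar u|)$ for all $u\in\mathbb{U}$, $s\in F\cap(s_0+\mathscr{S})\cap\mathbb{R}^n_{>0}$. *)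

(* Defs.v *)
From HB Require Import structures.
From mathcomp Require Import all_boot all_order all_algebra.
From mathcomp Require Import all_classical all_reals all_analysis.
Set Implicit Arguments. Unset Strict Implicit. Unset Printing Implicit Defensive.
Import Order.TTheory GRing.Theory Num.Theory.
Import numFieldNormedType.Exports.
Local Open Scope classical_set_scope.
Local Open Scope ring_scope.

Section CRN.
Variable R : realType.

Definition enorm (n : nat) (x : 'rV[R]_n) : R := Num.sqrt (\sum_i x 0 i ^+ 2).

Definition nonneg_orthant (n : nat) : set 'rV[R]_n := [set x | forall i, 0 <= x 0 i].
Definition pos_orthant (n : nat) : set 'rV[R]_n := [set x | forall i, 0 < x 0 i].
Arguments nonneg_orthant n : clear implicits.
Arguments pos_orthant n : clear implicits.

(* A CRN with n species and r reactions: column j of v (resp. vp) is the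
   reactant complex v_{.j} (resp. product complex v'_{.j}). *)
Definition reac_vec (n r : nat) (v vp : 'M[nat]_(n, r)) (j : 'I_r) : 'rV[R]_n :=
  \row_i ((vp i j)%:R - (v i j)%:R).

(* monomial s^{v_{.j}} = prod_i s_i^{v_ij} (with 0^0 = 1) *)
Definition monom (n r : nat) (v : 'M[nat]_(n, r)) (j : 'I_r) (s : 'rV[R]_n) : R :=
  \prod_i s 0 i ^+ v i j.

Definition gma_field (n r : nat) (v vp : 'M[nat]_(n, r)) (u : 'rV[R]_r) (s : 'rV[R]_n)
  : 'rV[R]_n :=
  \sum_j (u 0 j * monom v j s) *: reac_vec v vp j.

Definition stoich_subspace (n r : nat) (v vp : 'M[nat]_(n, r)) : set 'rV[R]_n :=
  [set x | exists c : 'I_r -> R, x = \sum_j c j *: reac_vec v vp j].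

Definition classKinf (a : R -> R) : Prop :=
  {within `[0, +oo[, continuous a} /\
  (forall x y, 0 <= x -> x < y -> a x < a y) /\
  a 0 = 0 /\
  (forall M, exists x, 0 <= x /\ M <= a x).

Definition C1_on (n : nat) (A : set 'rV[R]_n) (V : 'rV[R]_n -> R) : Prop :=
  (forall x, A x -> differentiable V x) /\
  (forall i : 'I_n, forall x, A x ->
     {for x, continuous (fun y => 'D_(delta_mx 0 i) V y)}).

Definition ISS_Lyapunov (n r : nat) (v vp : 'M[nat]_(n, r)) (U : set 'rV[R]_r)
  (s0 : 'rV[R]_n) (ubar : 'rV[R]_r) (sbar : 'rV[R]_n) (V : 'rV[R]_n -> R) : Prop :=
  {within nonneg_orthant n, continuous V} /\
  (forall s, nonneg_orthant n s -> 0 <= V s) /\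
  C1_on (pos_orthant n) V /\
  (forall M, exists N, forall s, nonneg_orthant n s -> N <= enorm s -> M <= V s) /\
  V sbar = 0 /\ (forall s, nonneg_orthant n s -> s != sbar -> 0 < V s) /\
  (forall F : set 'rV[R]_n, compact F -> F `<=` nonneg_orthant n ->
     exists alpha rho, classKinf alpha /\ classKinf rho /\
       forall w s, U w -> F s -> stoich_subspace v vp (s - s0) -> pos_orthant n s ->
         'd V s (gma_field v vp w s) <= - alpha (enorm (s - sbar)) + rho (enorm (w - ubar))).

Definition persistent (n : nat) (s : R -> 'rV[R]_n) : Prop :=
  forall i, (0 < limf_einf (fun t => (s t 0 i)%:E) (pinfty_nbhs R))%E.

End CRN.
Arguments nonneg_orthant R n : clear implicits.
Arguments pos_orthant R n : clear implicits.

(* Main.v *)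
Require Import Defs.
From HB Require Import structures.
From mathcomp Require Import all_boot all_order all_algebra.
From mathcomp Require Import all_classical all_reals all_analysis.
Import Order.TTheory GRing.Theory Num.Theory.
Import numFieldNormedType.Exports.
Local Open Scope classical_set_scope.
Local Open Scope ring_scope.
From mathcomp Require Import ring lra.

Section S.
Set Implicit Arguments. Unset Strict Implicit.
Variable R : realType.

Lemma entry_le_norm n (x : 'rV[R]_n) i : `|x 0 i| <= `|x|.
Proof.
have /mapP[j Hj ->] : `|x ord0 i| \in [seq `|x k.1 k.2| | k : 'I_1 * 'I_n].
  by apply/mapP; exists (ord0, i) => //=; rewrite mem_enum.
by rewrite [leRHS]/Num.norm /= mx_normrE; apply/bigmax_geP; right => /=; exists j.
Qed.

Lemma norm_le_enorm n (x : 'rV[R]_n) : `|x| <= enorm x.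
Proof.
rewrite [leLHS]/Num.norm /= mx_normrE; apply/bigmax_leP; split.
  exact: sqrtr_ge0.
move=> [a b] _ /=; rewrite (ord1 a) -sqrtr_sqr /enorm ler_sqrt; last first.
  by apply: sumr_ge0 => i _; rewrite sqr_ge0.
rewrite (bigD1 b) //= lerDl; apply: sumr_ge0 => i _; exact: sqr_ge0.
Qed.

Lemma enorm_le n (x : 'rV[R]_n) : enorm x <= Num.sqrt n%:R * `|x|.
Proof.
rewrite /enorm -[in leRHS](ger0_norm (normr_ge0 x)) -(sqrtr_sqr `|x|) -sqrtrM // ler_wsqrtr //.
apply: (@le_trans _ _ (\sum_(i < n) `|x| ^+ 2)).
  2: by rewrite sumr_const card_ord mulr_natl.
apply: ler_sum => i _.
rewrite -[x 0 i ^+ 2]real_normK ?num_real // lerXn2r ?nnegrE //.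
exact: entry_le_norm.
Qed.
End S.
Section S.
Set Implicit Arguments. Unset Strict Implicit.
Variable R : realType.

Lemma trap (g dg : R -> R) (a b th : R) : a <= b ->
  (forall x, a <= x <= b -> {for x, continuous g}) ->
  (forall x, a < x < b -> is_derive x 1 g (dg x)) ->
  (forall x, a < x < b -> th < g x -> dg x <= 0) ->
  g a <= th -> g b <= th.
Proof.
move=> ab gc gd gneg ga; rewrite leNgt; apply/negP => gb.
pose E := [set t | a <= t <= b /\ g t <= th].
have Ea : E a by split => //; rewrite lexx ab.
have Eub : ubound E b by move=> t [/andP[]].
have hsE : has_sup E by split; [exists a | exists b].
pose sg := sup E.
have asg : a <= sg := sup_upper_bound hsE Ea.
have sgb : sg <= b := ge_sup (ex_intro _ a Ea) Eub.
have gsg : g sg <= th.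
  rewrite leNgt; apply/negP => hsg.
  have H : \forall t \near sg, th < g t.
    exact: (cvgr_gt _ (gc sg (introT andP (conj asg sgb))) _ hsg).
  have [e /= e0 He] := (iffLR (nbhs_ballP _ _)) H.
  have [y Ey sgy] := sup_adherent e0 hsE.
  have ysg : y <= sg := sup_upper_bound hsE Ey.
  have : th < g y.
    apply: He; rewrite -ball_normE /ball_ /= ger0_norm ?subr_ge0 //.
    by rewrite ltrBlDr addrC -ltrBlDr.
  by rewrite ltNge; case: Ey => _ ->.
have sgb' : sg < b.
  rewrite lt_neqAle sgb andbT; apply/eqP => sgE.
  by move: gb; rewrite -sgE ltNge gsg.
have [c /[!in_itv] /= /andP[sgc cb] hc] : exists2 c, c \in `]sg, b[%R & g b - g sg = dg c * (b - sg).
  apply: MVT => //.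
    move=> x /[!in_itv] /= /andP[sgx xb]; apply: gd.
    by rewrite xb (le_lt_trans asg sgx).
  apply: continuous_in_subspaceT => x /[!inE] /= /[!in_itv] /= /andP[sgx xb].
  by apply: gc; rewrite xb (le_trans asg sgx).
have gcth : th < g c.
  rewrite ltNge; apply/negP => gcle.
  have : c <= sg.
    apply: (sup_upper_bound hsE); split => //.
    by rewrite (ltW cb) (le_trans asg (ltW sgc)).
  by rewrite leNgt sgc.
have dgc := gneg c (introT andP (conj (le_lt_trans asg sgc) cb)) gcth.
have : g b - g sg <= 0.
  by rewrite hc mulr_le0_ge0 // subr_ge0 ltW.
rewrite subr_le0 => gbsg.
by move: gb; rewrite ltNge (le_trans gbsg gsg).
Qed.

Lemma eventually_low (g dg : R -> R) (T c : R) (P : R -> Prop) : 0 < c ->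
  (forall x, T < x -> {for x, continuous g}) ->
  (forall x, T < x -> is_derive x 1 g (dg x)) ->
  (forall x, T < x -> 0 <= g x) ->
  (forall x, T < x -> ~ P x -> dg x <= - c) ->
  exists t, T < t /\ P t.
Proof.
move=> c0 gc gd gpos hneg; apply: contrapT => hn.
have nP x : T < x -> ~ P x by move=> Tx Px; apply: hn; exists x.
pose a := T + 1; pose b := a + g a / c + 1.
have Ta : T < a by rewrite ltrDl.
have ab : a < b by rewrite /b -addrA ltrDl ltr_wpDl // divr_ge0 // ?gpos // ltW.
have [x /[!in_itv] /= /andP[ax xb] hx] : exists2 x, x \in `]a, b[%R & g b - g a = dg x * (b - a).
  apply: MVT => //.
    move=> x /[!in_itv] /= /andP[ax xb]; apply: gd; exact: lt_trans Ta ax.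
  apply: continuous_in_subspaceT => x /[!inE] /= /[!in_itv] /= /andP[ax xb].
  by apply: gc; exact: lt_le_trans Ta ax.
have Tx : T < x := lt_trans Ta ax.
have dgx := hneg x Tx (nP x Tx).
have : g b - g a <= - c * (b - a) by rewrite hx ler_wpM2r // subr_ge0 ltW.
have -> : - c * (b - a) = - g a - c.
  rewrite /b; field; exact: lt0r_neq0.
move=> hb0; have hb : g b <= - c by lra.
have := gpos b (lt_trans Ta ab).
by rewrite leNgt (le_lt_trans hb) // oppr_lt0.
Qed.
End S.
Section S.
Set Implicit Arguments. Unset Strict Implicit.
Variable R : realType.

Lemma classK_small (rho : R -> R) : classKinf rho ->
  forall e, 0 < e -> exists2 d, 0 < d & forall x, 0 <= x -> x < d -> rho x < e.
Proof.
case=> rc [rinc [r0 _]] e e0.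
have A0 : [set` `[0, +oo[%R] (0 : R) by rewrite /= in_itv /= lexx.
have H := (iffLR (subspace_continuousP _ _)) rc 0 A0.
have H2 : \forall x \near within [set` `[0, +oo[%R] (nbhs (0 : R)), rho x < e.
  apply: (cvgr_lt _ H).
  by rewrite /from_subspace r0.
move: H2; rewrite /within => /nbhs_ballP [d /= d0 Hd].
exists d => // x x0 xd; apply: (Hd x).
  by rewrite -ball_normE /ball_ /= sub0r normrN ger0_norm.
by rewrite /= in_itv /= x0.
Qed.
End S.
Section S.
Set Implicit Arguments. Unset Strict Implicit.
Variable R : realType.

Lemma persist1 (f : R -> R) :
  (0 < limf_einf (fun t => (f t)%:E) (pinfty_nbhs R))%E ->
  exists2 d, 0 < d & \forall t \near +oo, d <= f t.
Proof.
rewrite limf_einfE => /ereal_sup_gt [y [V PV <-]] y0.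
have lb t : V t -> (ereal_inf [set (f x)%:E | x in V] <= (f t)%:E)%E.
  by move=> Vt; apply: ereal_inf_lbound; exists t.
move: y0 lb; case: (ereal_inf _) => [r| |] //= r0 lb.
- exists r; first by rewrite -lte_fin.
  by apply: filterS PV => t /lb; rewrite lee_fin.
- exists 1 => //; apply: filterS PV => t /lb.
  by rewrite leye_eq.
Qed.

Lemma persist_lb n (s : R -> 'rV[R]_n) : persistent s ->
  exists2 d : 'I_n -> R, (forall i, 0 < d i) & \forall t \near +oo, forall i, d i <= s t 0 i.
Proof.
move=> hp.
have hd : forall i, exists d, 0 < d /\ \forall t \near +oo, d <= s t 0 i.
  by move=> i; have [d ? ?] := @persist1 (fun t => s t 0 i) (hp i); exists d.
have [d hd'] := choice hd.
exists d; first by move=> i; case: (hd' i).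
by apply: filter_forall => i; case: (hd' i).
Qed.
End S.
Section S.
Set Implicit Arguments. Unset Strict Implicit.
Variable R : realType.

Lemma level_set n (V : 'rV[R]_n -> R) (F : set 'rV[R]_n) (sbar : 'rV[R]_n) (eps : R) :
  compact F -> {within F, continuous V} -> (forall x, F x -> 0 <= V x) ->
  (forall x, F x -> x != sbar -> 0 < V x) -> 0 < eps ->
  exists2 th, 0 < th & forall x, F x -> eps <= `|x - sbar| -> th < V x.
Proof.
move=> cF cV V0 Vpos e0.
pose K := F `&` ~` ball sbar eps.
have cK : compact K by apply: compact_closedI cF _; apply: open_closedC; exact: ball_open.
have cVK : {within K, continuous V} by apply: continuous_subspaceW cV => x [].
have cimg := continuous_compact cVK cK.
have clim : closed (V @` K) by apply: compact_closed => //; exact: Rhausdorff.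
have Kfar x : K x -> eps <= `|x - sbar|.
  case=> _ nb; rewrite leNgt distrC; apply/negP => hb; apply: nb.
  by rewrite -ball_normE /ball_ /=.
have op := closed_openC clim.
have n0 : (~` (V @` K)) 0.
  move=> [x Kx Vx]; have Fx : F x by case: Kx.
  have : x != sbar.
    apply/eqP => xs; have := Kfar x Kx; rewrite xs subrr normr0 leNgt e0 //.
  by move=> /(Vpos x Fx); rewrite Vx ltxx.
have /nbhs_ballP[e /= e0' He] : nbhs (0 : R) (~` (V @` K)).
  by apply: open_nbhs_nbhs; split.
exists (e / 2); first by rewrite divr_gt0.
move=> x Fx far.
have Kx : K x.
  split => //; rewrite /setC -ball_normE /ball_ /= distrC => hb.
  by have := le_lt_trans far hb; rewrite ltxx.
have : ~ ball (0:R) e (V x) by move=> /He; apply; exists x.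
rewrite -ball_normE /ball_ /= sub0r normrN ger0_norm ?V0 // => /negP; rewrite -leNgt => eV.
by apply: lt_le_trans eV; rewrite ltr_pdivrMr // ltr_pMr // ltr1n.
Qed.
End S.
Section S.
Set Implicit Arguments. Unset Strict Implicit.
Variable R : realType.

Lemma lincoord_cont n (C : 'M[R]_n) (k : 'I_n) :
  continuous (fun x : 'rV[R]_n => (x *m C) 0 k).
Proof.
have -> : (fun x : 'rV[R]_n => (x *m C) 0 k) =
    \sum_(i < n) (fun x : 'rV[R]_n => x 0 i * C i k).
  by apply/funext => x; rewrite fct_sumE mxE.
move=> x; apply: differentiable_continuous; apply: differentiable_sum => i.
apply: differentiableM; first exact: differentiable_coord.
exact: differentiable_cst.
Qed.

Lemma stoich_inv n r (v vp : 'M[nat]_(n, r)) (u : R -> 'rV[R]_r)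
  (s : R -> 'rV[R]_n) (s0 : 'rV[R]_n) :
  s 0 = s0 -> {within `[0, +oo[, continuous s} ->
  (forall t : R, 0 < t -> is_derive t 1 s (gma_field v vp (u t) (s t))) ->
  forall t : R, 0 <= t -> stoich_subspace v vp (s t - s0).
Proof.
move=> s00 sc sd t t0.
pose A : 'M[R]_(r, n) := \matrix_(j, i) reac_vec R v vp j 0 i.
have rowA j : row j A = reac_vec R v vp j by apply/rowP => i; rewrite !mxE.
pose C := cokermx A.
have AC : A *m C = 0 := mulmx_coker A.
have rC j : reac_vec R v vp j *m C = 0 by rewrite -rowA -row_mul AC row0.
have fC w x : gma_field v vp w x *m C = 0.
  rewrite /gma_field mulmx_suml big1 // => j _.
  by rewrite -scalemxAl rC scaler0.
suff key : s t *m C = s0 *m C.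
  have : (s t - s0 <= A)%MS by rewrite submxE mulmxBl key subrr.
  case/submxP => D ->; exists (fun j => D 0 j).
  by rewrite mulmx_sum_row; apply: eq_bigr => j _; rewrite rowA.
apply/rowP => k.
pose h := fun y : 'rV[R]_n => (y *m C) 0 k.
have hlin : linear h by move=> a x y; rewrite /h mulmxDl -scalemxAl !mxE.
pose hM := GRing.isLinear.Build _ _ _ _ _ hlin.
pose hL : {linear 'rV[R]_n -> R} := HB.pack h hM.
have hc : continuous hL := @lincoord_cont n C k.
case: (ltrgt0P t) t0 => // [tpos|->] _; last by rewrite s00.
have [c _ hc'] : exists2 c, c \in `]0, t[%R & (hL \o s) t - (hL \o s) 0 = 0 * (t - 0).
  apply: MVT => //.
    move=> x /[!in_itv] /= /andP[x0 xt].
    have dsx := sd x x0.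
    have dfs : differentiable s x.
      by apply/derivable1_diffP; exact: ex_derive.
    have dc : differentiable (hL \o s) x.
      by apply: differentiable_comp => //; exact: linear_differentiable.
    have -> : (0 : R) = 'D_1 (hL \o s) x.
      rewrite deriveE // diff_comp //; last exact: linear_differentiable.
      rewrite /= (diff_lin _ hc) -deriveE // derive_val.
      by rewrite /= /h fC mxE.
    apply: derivableP; exact: diff_derivable.
  have sc' : {within `[0, t], continuous s}.
    apply: continuous_subspaceW sc => y /=; rewrite !in_itv /= => /andP[-> _].
    done.
  move=> y; exact: (continuous_comp (sc' y) (hc _)).
move: hc'; rewrite mul0r => /eqP; rewrite subr_eq0 /= => /eqP.
by rewrite s00.
Qed.
End S.
Theorem corollary3p3 (R : realType) (n r : nat) (v vp : 'M[nat]_(n, r))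
  (U : set 'rV[R]_r) (u : R -> 'rV[R]_r) (ubar : 'rV[R]_r)
  (s : R -> 'rV[R]_n) (s0 sbar : 'rV[R]_n) (V : 'rV[R]_n -> R) :
  (forall j : 'I_r, col j v != col j vp) ->
  U `<=` pos_orthant R r ->
  (forall t : R, 0 <= t -> U (u t)) ->
  pos_orthant R r ubar ->
  u t @[t --> +oo] --> ubar ->
  nonneg_orthant R n s0 ->
  s 0 = s0 ->
  {within `[0, +oo[, continuous s} ->
  (forall t : R, 0 < t -> is_derive t 1 s (gma_field v vp (u t) (s t))) ->
  (exists M, forall t : R, 0 <= t -> enorm (s t) <= M) ->
  pos_orthant R n sbar ->
  stoich_subspace v vp (sbar - s0) ->
  gma_field v vp ubar sbar = 0 ->
  (forall x, pos_orthant R n x -> stoich_subspace v vp (x - s0) ->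
     gma_field v vp ubar x = 0 -> x = sbar) ->
  ISS_Lyapunov v vp U s0 ubar sbar V ->
  persistent s ->
  s t @[t --> +oo] --> sbar.
Proof.
move=> _ hU huU hub hucvg hs0 hs00 hsc hsd [M hM] hsb _ _ _ hV hp.
case: hV => Vc [Vnn [[Vdiff _] [_ [V0 [Vpos Viv]]]]].
have [d dpos hd] := persist_lb hp.
pose F := [set x : 'rV[R]_n | forall i, `[d i, M]%classic (x ord0 i)].
have cF : compact F.
  have cF0 := (@rV_compact _ n (fun i => `[d i, M]%classic) (fun i => @segment_compact _ (d i) M)).
  exact cF0.
have FnonN : F `<=` nonneg_orthant R n.
  move=> x Fx i; have := Fx i; rewrite /= in_itv /= => /andP[dx _].
  exact: le_trans (ltW (dpos i)) dx.
have [alpha [rho [[acont [ainc [a0 _]]] [rK Hiv]]]] := Viv F cF FnonN.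
have stoich := stoich_inv hs00 hsc hsd.
apply/cvgrPdist_lt => eps eps0.
have [th th0 Hth] := level_set cF (continuous_subspaceW FnonN Vc)
   (fun x Fx => Vnn x (FnonN x Fx)) (fun x Fx => Vpos x (FnonN x Fx)) eps0.

have Vcs : {for sbar, continuous V} := differentiable_continuous (Vdiff sbar hsb).
have [e2 e20 He2] : exists2 e2, 0 < e2 & forall x, `|sbar - x| < e2 -> V x < th.
  have H : \forall x \near sbar, `|V sbar - V x| < th.
    by move: Vcs => /cvgrPdist_lt; apply.
  have [e /= e0 He] := (iffLR (nbhs_ballP _ _)) H.
  exists e => // x xe; have := He x; rewrite -ball_normE /ball_ /= => /(_ xe).
  rewrite V0 sub0r normrN => h; exact: le_lt_trans (ler_norm _) h.
have ae2 : 0 < alpha e2 by rewrite -a0; apply: ainc.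
have [dr dr0 Hdr] := classK_small rK (divr_gt0 ae2 (ltr0n _ 2)).
pose Kr := Num.sqrt (r%:R : R) + 1.
have Kr0 : 0 < Kr by rewrite ltr_wpDl ?sqrtr_ge0.
have hu : \forall t \near +oo, `|ubar - u t| < dr / Kr.
  by move: hucvg => /cvgrPdist_lt; apply; rewrite divr_gt0.
case: (filterI hd hu) => T [Treal HT].
pose T1 := Num.max T 0.
have HT1 t : T1 < t -> ((forall i, d i <= s t 0 i) /\ `|ubar - u t| < dr / Kr) /\ 0 < t.
  by rewrite /T1 gt_max => /andP[/HT ? ?].
have Hs t : T1 < t -> F (s t) /\ pos_orthant R n (s t).
  move=> /HT1 [[hdi _] t0]; split.
  - move=> i; rewrite /= in_itv /= hdi /=.
    apply: le_trans (hM t (ltW t0)); apply: le_trans (norm_le_enorm _).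
    exact: le_trans (ler_norm _) (entry_le_norm _ _).
  - move=> i; exact: lt_le_trans (dpos i) (hdi i).
have Hdg t : T1 < t -> 'd V (s t) (gma_field v vp (u t) (s t)) <=
    - alpha (enorm (s t - sbar)) + rho (enorm (u t - ubar)).
  move=> Tt; have [Fs ps] := Hs t Tt; have [_ t0] := HT1 t Tt.
  by apply: Hiv => //; [exact: huU (ltW t0) | exact: stoich (ltW t0)].
have Hrho t : T1 < t -> rho (enorm (u t - ubar)) < alpha e2 / 2.
  move=> /HT1 [[_ hut] _]; apply: Hdr; first exact: sqrtr_ge0.
  apply: le_lt_trans (enorm_le _) _.
  apply: (@le_lt_trans _ _ (Kr * `|u t - ubar|)).
    by rewrite ler_wpM2r // lerDl.
  have e : Kr * (dr / Kr) = dr by rewrite mulrC divfK ?gt_eqF.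
  by rewrite distrC -e ltr_pM2l.
pose g := V \o s.
pose dg t := 'd V (s t) (gma_field v vp (u t) (s t)).
have Hder t : T1 < t -> differentiable g t /\ is_derive t 1 g (dg t).
  move=> Tt; have [[_ _] t0] := HT1 t Tt; have [_ ps] := Hs t Tt.
  have dsx := hsd t t0.
  have dfs : differentiable s t by apply/derivable1_diffP; exact: ex_derive.
  have dV := Vdiff (s t) ps.
  have dgd : differentiable g t := differentiable_comp dfs dV.
  split => //.
  have -> : dg t = 'D_1 g t.
    by rewrite deriveE // diff_comp //= -(@deriveE _ _ _ s t 1 dfs) derive_val.
  apply: derivableP; exact: diff_derivable.
have Hcont t : T1 < t -> {for t, continuous g}.
  by move=> Tt; exact: differentiable_continuous (Hder t Tt).1.
have Hneg t : T1 < t -> e2 <= `|s t - sbar| -> dg t <= - (alpha e2 / 2).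
  move=> Tt far.
  have en : e2 <= enorm (s t - sbar) := le_trans far (norm_le_enorm _).
  have aen : alpha e2 <= alpha (enorm (s t - sbar)).
    move: en; rewrite le_eqVlt => /orP[/eqP <- //|lt].
    by apply/ltW/ainc => //; exact: ltW.
  have := Hdg t Tt; have := Hrho t Tt; rewrite /dg; lra.
have Hfar t : th <= g t -> e2 <= `|s t - sbar|.
  move=> hth; rewrite leNgt; apply/negP => hlt.
  have := He2 (s t); rewrite distrC => /(_ hlt).
  by rewrite /g /= ltNge hth.
have [ts [Tts hts]] : exists t, T1 < t /\ `|s t - sbar| < e2.
  apply: (@eventually_low _ g dg T1 (alpha e2 / 2)) => //.
  - by rewrite divr_gt0.
  - by move=> t Tt; exact: (Hder t Tt).2.
  - move=> t Tt; apply: Vnn => i; exact/ltW/((Hs t Tt).2 i).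
  - move=> t Tt nP; apply: Hneg => //; rewrite leNgt; apply/negP => h; exact: nP.
have gts : g ts <= th.
  by apply/ltW; apply: He2; rewrite distrC.
exists ts; split; first exact: num_real.
move=> t tst.
have gt : g t <= th.
  apply: (@trap _ g dg ts t th) => //.
  - exact: ltW.
  - move=> x /andP[tsx _]; apply: Hcont; exact: lt_le_trans Tts tsx.
  - move=> x /andP[tsx _]; apply: (Hder x _).2; exact: lt_trans Tts tsx.
  - move=> x /andP[tsx _] hth.
    have Tx : T1 < x := lt_trans Tts tsx.
    apply: le_trans (Hneg x Tx (Hfar x (ltW hth))) _.
    by rewrite oppr_le0 divr_ge0 // ltW.
rewrite distrC ltNge; apply/negP => far.
have := Hth (s t) (Hs t (lt_trans Tts tst)).1 far.
by rewrite ltNge gt.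
Qed.
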